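(* There exists an $HS(3,K_4^{(3)}+e;16,6)$.
   Context: $K_4^{(3)}+e$ denotes the 3-uniform hypergraph with vertex set $\{1,2,3,4,5\}$ and edge set $\{\{1,2,3\},\{1,2,4\},\{1,3,4\},\{2,3,4\},\{3,4,5\}\}$. An $HS(3,K_4^{(3)}+e;v,s)$ is a collection of hypergraphs (blocks) on subsets of a $v$-set $V$, each isomorphic to $K_4^{(3)}+e$, whose edge sets partition the set of all 3-subsets of $V$ that are not contained in a fixed $s$-subset of $V$ (the hole). *)

(* Defs.v *)
From mathcomp Require Import all_boot.
Set Implicit Arguments. Unset Strict Implicit. Unset Printing Implicit Defensive.

(* Vertices of K_4^(3)+e: 1..5 of the paper are 0..4 here (type 'I_5). *)
Definition triple5 (a b c : nat) : {set 'I_5} :=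
  [set (inord a : 'I_5); inord b; inord c].

Definition K4e_edges : {set {set 'I_5}} :=
  [set triple5 0 1 2; triple5 0 1 3; triple5 0 2 3; triple5 1 2 3; triple5 2 3 4].

(* A block on V = 'I_v is a copy of K_4^(3)+e, given by an injective
   embedding f of its vertex set into V; its edges are the images. *)
Definition block_edges (v : nat) (f : {ffun 'I_5 -> 'I_v}) : {set {set 'I_v}} :=
  [set f @: (e : {set 'I_5}) | e in K4e_edges].

(* B is an HS(3, K_4^(3)+e; v, s) with hole H: |H| = s, every block is an
   injective copy, and the edge sets of the blocks partition the 3-subsets
   of V not contained in H (each such triple lies in exactly one block,
   every other set lies in none). *)
Definition is_HS (v s : nat) (H : {set 'I_v}) (B : seq {ffun 'I_5 -> 'I_v}) : Prop :=
  [/\ #|H| = s,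
      all (fun f : {ffun 'I_5 -> 'I_v} => injectiveb f) B &
      forall T : {set 'I_v},
        count (fun f => T \in block_edges f) B = ((#|T| == 3) && ~~ (T \subset H))].

(* Main.v *)
Require Import Defs.
From mathcomp Require Import all_boot.
Set Implicit Arguments. Unset Strict Implicit. Unset Printing Implicit Defensive.
Definition mkf (l : seq nat) : {ffun 'I_5 -> 'I_16} := [ffun i : 'I_5 => inord (nth 0 l i)].
Definition S3 (l : seq nat) a b c : {set 'I_16} :=
  [set (inord (nth 0 l a) : 'I_16); inord (nth 0 l b); inord (nth 0 l c)].

Lemma img3 l a b c : a < 5 -> b < 5 -> c < 5 -> mkf l @: triple5 a b c = S3 l a b c.
Proof. by move=> ha hb hc; rewrite /triple5 /S3 !imsetU !imset_set1 !ffunE !inordK. Qed.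

Lemma edges_mkf l (T : {set 'I_16}) :
  (T \in block_edges (mkf l)) =
  [|| T == S3 l 0 1 2, T == S3 l 0 1 3, T == S3 l 0 2 3, T == S3 l 1 2 3 | T == S3 l 2 3 4].
Proof.
apply/imsetP/idP.
  case=> e; rewrite !inE.
  by move=> /orP[/orP[/orP[/orP[/eqP->|/eqP->]|/eqP->]|/eqP->]|/eqP->] ->; rewrite img3 // eqxx ?orbT.
move=> /orP[/eqP->|/orP[/eqP->|/orP[/eqP->|/orP[/eqP->|/eqP->]]]]; [exists (triple5 0 1 2)|exists (triple5 0 1 3)|exists (triple5 0 2 3)|exists (triple5 1 2 3)|exists (triple5 2 3 4)]; rewrite ?img3 // !inE eqxx ?orbT //.
Qed.

Definition eq3 (x y z p q r : nat) :=
  [&& ((x == p) || (x == q) || (x == r)) &&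
      ((y == p) || (y == q) || (y == r)) &&
      ((z == p) || (z == q) || (z == r)),
      ((p == x) || (p == y) || (p == z)) &&
      ((q == x) || (q == y) || (q == z))
    & (r == x) || (r == y) || (r == z)].

Lemma eq3E (x y z p q r : 'I_16) :
  ([set x; y; z] == [set p; q; r]) = eq3 x y z p q r.
Proof. by rewrite eqEsubset !subUset !sub1set !inE. Qed.

Definition good (l : seq nat) := [&& size l == 5, uniq l & all (fun v => v < 16) l].

Lemma good_nth l i : good l -> i < 5 -> nth 0 l i < 16.
Proof.
case/and3P=> /eqP hs _ /allP ha hi; apply: ha; apply: mem_nth; by rewrite hs.
Qed.

Lemma good_inj l : good l -> injectiveb (mkf l).
Proof.
move=> hg; have := hg; case/and3P=> /eqP hs hu _.
apply/injectiveP => i j; rewrite !ffunE => /(congr1 (@nat_of_ord 16)).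
rewrite !inordK ?good_nth // => /eqP; rewrite nth_uniq ?hs // => /eqP h.
exact: val_inj.
Qed.

Lemma card3 (x y z : 'I_16) : x != y -> x != z -> y != z -> #|[set x; y; z]| = 3.
Proof.
move=> hxy hxz hyz; rewrite setUC cardsU1 cards2 !inE hxy negb_or.
by rewrite eq_sym hxz eq_sym hyz.
Qed.

Lemma inord_neq (u v : nat) : u < 16 -> v < 16 -> u != v -> (inord u : 'I_16) != inord v.
Proof. by move=> hu hv; apply: contra => /eqP /(congr1 (@nat_of_ord 16)); rewrite !inordK // => ->. Qed.

Lemma S3_card l a b c : good l -> a < 5 -> b < 5 -> c < 5 -> a != b -> a != c -> b != c ->
  #|S3 l a b c| = 3.
Proof.
move=> hg ha hb hc hab hac hbc; have := hg; case/and3P=> /eqP hs hu _.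
by rewrite /S3 card3 // inord_neq ?good_nth // nth_uniq ?hs.
Qed.

Lemma cards3P (T : {set 'I_16}) : #|T| = 3 ->
  exists x y z, [/\ x != y, x != z, y != z & T = [set x; y; z]].
Proof.
move=> hT.
have : 0 < #|T| by rewrite hT.
case/card_gt0P => x hx.
have : #|T :\ x| = 2 by rewrite (cardsD1 x T) hx in hT; case: hT.
move=> h2; have [y [z [hyz hD]]] := cards2P (T :\ x) (introT eqP h2).
have hy : y \in T :\ x by rewrite hD !inE eqxx.
have hz : z \in T :\ x by rewrite hD !inE eqxx orbT.
move: hy hz; rewrite !inE => /andP [hyx _] /andP [hzx _].
exists x, y, z; split; rewrite ?(eq_sym x) //.
by rewrite -(setD1K hx) hD setUA.
Qed.

Definition hit (l : seq nat) (x y z : nat) :=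
  [|| eq3 x y z (nth 0 l 0) (nth 0 l 1) (nth 0 l 2),
      eq3 x y z (nth 0 l 0) (nth 0 l 1) (nth 0 l 3),
      eq3 x y z (nth 0 l 0) (nth 0 l 2) (nth 0 l 3),
      eq3 x y z (nth 0 l 1) (nth 0 l 2) (nth 0 l 3) |
      eq3 x y z (nth 0 l 2) (nth 0 l 3) (nth 0 l 4)].

Definition check (L : seq (seq nat)) :=
  all good L &&
  all (fun x => all (fun y => all (fun z =>
    ((x != y) && (x != z) && (y != z)) ==>
    (count (fun l => hit l x y z) L == ~~ ((x < 6) && (y < 6) && (z < 6))))
    (iota 0 16)) (iota 0 16)) (iota 0 16).

Definition H0 : {set 'I_16} := [set i : 'I_16 | i < 6].

Lemma H0_card : #|H0| = 6.
Proof.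
rewrite cardsE (@eq_card _ _ (mem [seq (inord i : 'I_16) | i <- iota 0 6])).
  have hu : uniq [seq (inord i : 'I_16) | i <- iota 0 6].
    rewrite map_inj_in_uniq ?iota_uniq // => u v; rewrite !mem_iota /= => hu hv.
    move/(congr1 (@nat_of_ord 16)); rewrite !inordK //.
      by apply: leq_trans hv _.
    by apply: leq_trans hu _.
  by rewrite (card_uniqP hu) size_map size_iota.
move=> i; rewrite -[LHS]/(i < 6); apply/idP/mapP.
  by move=> hi; exists (nat_of_ord i); rewrite ?mem_iota //; apply: val_inj; rewrite /= inordK.
by case=> k; rewrite mem_iota /= => hk ->; rewrite inordK //; apply: leq_trans hk _.
Qed.

Lemma main_gen (L : seq (seq nat)) : check L -> is_HS 6 H0 [seq mkf l | l <- L].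
Proof.
case/andP=> /allP hgood /allP hall.
split; first exact: H0_card.
  by rewrite all_map; apply/allP => l hl; apply: good_inj; apply: hgood.
move=> T; rewrite count_map.
case: (boolP (#|T| == 3)) => h3 /=.
  have [x [y [z [hxy hxz hyz ->]]]] := cards3P (eqP h3).
  rewrite !subUset !sub1set !inE.
  rewrite (@eq_in_count _ _ (fun l => hit l x y z)); last first.
    move=> l hl /=; have hg := hgood l hl.
    rewrite edges_mkf /S3 !eq3E /hit !inordK ?good_nth //.
  have := hall x; rewrite mem_iota ltn_ord => /(_ isT) /allP /(_ y).
  rewrite mem_iota ltn_ord => /(_ isT) /allP /(_ z); rewrite mem_iota ltn_ord => /(_ isT).
  by rewrite hxy hxz hyz /= => /eqP.
apply/eqP; rewrite -leqn0 leqNgt -has_count; apply/hasPn => l hl /=.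
have hg := hgood l hl.
rewrite edges_mkf; apply/negP.
by case/orP=> [/eqP hT|/orP [/eqP hT|/orP [/eqP hT|/orP [/eqP hT|/eqP hT]]]]; move: h3; rewrite hT S3_card.
Qed.

Definition Lblocks : seq (seq nat) := [:: [:: 1; 8; 0; 6; 14];
  [:: 1; 14; 0; 10; 13];
  [:: 5; 11; 0; 13; 1];
  [:: 0; 6; 2; 11; 4];
  [:: 8; 15; 0; 2; 7];
  [:: 0; 2; 9; 13; 8];
  [:: 6; 7; 2; 10; 0];
  [:: 2; 12; 0; 14; 15];
  [:: 3; 10; 0; 6; 7];
  [:: 0; 7; 3; 14; 13];
  [:: 5; 7; 2; 9; 1];
  [:: 0; 9; 3; 15; 2];
  [:: 12; 13; 0; 3; 11];
  [:: 0; 4; 6; 12; 15];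
  [:: 7; 13; 0; 4; 11];
  [:: 0; 9; 4; 8; 5];
  [:: 0; 15; 4; 10; 6];
  [:: 8; 15; 4; 14; 0];
  [:: 2; 12; 4; 7; 1];
  [:: 0; 8; 5; 7; 14];
  [:: 10; 12; 0; 9; 5];
  [:: 7; 11; 0; 10; 5];
  [:: 0; 12; 5; 15; 7];
  [:: 9; 11; 0; 14; 5];
  [:: 8; 14; 6; 9; 0];
  [:: 0; 13; 6; 15; 7];
  [:: 2; 4; 6; 13; 1];
  [:: 11; 13; 6; 14; 1];
  [:: 4; 13; 9; 11; 1];
  [:: 0; 11; 8; 12; 4];
  [:: 0; 13; 8; 14; 11];
  [:: 2; 9; 3; 6; 12];
  [:: 3; 12; 2; 10; 11];
  [:: 4; 8; 2; 10; 13];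
  [:: 4; 9; 2; 15; 7];
  [:: 5; 12; 4; 14; 2];
  [:: 2; 14; 5; 6; 7];
  [:: 2; 5; 8; 13; 10];
  [:: 5; 10; 2; 15; 11];
  [:: 2; 11; 5; 12; 9];
  [:: 2; 12; 6; 8; 10];
  [:: 13; 15; 2; 14; 7];
  [:: 8; 11; 2; 9; 12];
  [:: 2; 14; 9; 10; 4];
  [:: 6; 14; 10; 15; 3];
  [:: 5; 6; 4; 11; 10];
  [:: 4; 7; 8; 11; 6];
  [:: 7; 9; 4; 14; 10];
  [:: 4; 15; 11; 12; 6];
  [:: 6; 10; 12; 13; 4];
  [:: 7; 8; 6; 13; 9];
  [:: 6; 11; 9; 15; 13];
  [:: 8; 12; 13; 15; 7];
  [:: 12; 14; 10; 11; 8];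
  [:: 0; 9; 1; 7; 15];
  [:: 0; 15; 1; 11; 12];
  [:: 4; 10; 1; 12; 0];
  [:: 1; 7; 3; 10; 5];
  [:: 9; 14; 1; 3; 6];
  [:: 1; 3; 8; 12; 9];
  [:: 7; 6; 3; 11; 1];
  [:: 3; 13; 1; 15; 14];
  [:: 2; 11; 1; 7; 6];
  [:: 1; 6; 2; 15; 12];
  [:: 4; 6; 3; 8; 0];
  [:: 1; 8; 2; 14; 3];
  [:: 13; 12; 1; 2; 10];
  [:: 1; 5; 7; 13; 14];
  [:: 6; 12; 1; 5; 10];
  [:: 1; 8; 5; 9; 4];
  [:: 1; 14; 5; 11; 7];
  [:: 9; 14; 5; 15; 1];
  [:: 3; 13; 5; 6; 0];
  [:: 1; 9; 4; 6; 15];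
  [:: 11; 13; 1; 8; 4];
  [:: 6; 10; 1; 11; 4];
  [:: 1; 13; 4; 14; 6];
  [:: 8; 10; 1; 15; 4];
  [:: 9; 15; 7; 8; 1];
  [:: 1; 12; 7; 14; 6];
  [:: 3; 5; 7; 12; 0];
  [:: 10; 12; 7; 15; 0];
  [:: 5; 12; 8; 10; 0];
  [:: 1; 10; 9; 13; 5];
  [:: 1; 12; 9; 15; 10];
  [:: 3; 8; 2; 7; 13];
  [:: 2; 13; 3; 11; 10];
  [:: 5; 9; 3; 11; 12];
  [:: 5; 8; 3; 14; 6];
  [:: 4; 13; 5; 15; 3];
  [:: 3; 15; 4; 7; 6];
  [:: 3; 4; 9; 12; 11];
  [:: 4; 11; 3; 14; 10];
  [:: 3; 10; 4; 13; 8];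
  [:: 3; 13; 7; 9; 11];
  [:: 12; 14; 3; 15; 6];
  [:: 9; 10; 3; 8; 13];
  [:: 3; 15; 8; 11; 5];
  [:: 7; 15; 11; 14; 2];
  [:: 4; 7; 5; 10; 11];
  [:: 5; 6; 9; 10; 7];
  [:: 6; 8; 5; 15; 11];
  [:: 5; 14; 10; 13; 7];
  [:: 7; 11; 13; 12; 5];
  [:: 6; 9; 7; 12; 8];
  [:: 7; 10; 8; 14; 12];
  [:: 9; 13; 12; 14; 6];
  [:: 13; 15; 11; 10; 9]].

Lemma check_ok : check Lblocks.
Proof. by vm_compute. Qed.

Theorem lemma3p8 :
  exists (H : {set 'I_16}) (B : seq {ffun 'I_5 -> 'I_16}), is_HS 6 H B.
Proof.
exists H0, [seq mkf l | l <- Lblocks]; exact: main_gen check_ok.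
Qed.
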